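(* Let $H \in \mathbb{R}^{r \times n}_+$ be an entrywise nonnegative matrix satisfying the NC-SSC, i.e., $e - e_i \in \operatorname{cone}(H)$ for all $i \in \{1,\dots,r\}$. Define $$p^* = \max_{x \in \mathbb{R}^r} \|x\|_2 \ \text{ subject to } \ e^\top x = 1,\ H^\top x \ge 0,$$ and $$q^* = \max_{x \in \mathbb{R}^r} \|x\|_2 \ \text{ subject to } \ e^\top x = 1,\ H^\top x \ge 0,\ -1 \le x_i \le 1 \text{ for all } i.$$ Then $p^* = 1$ if and only if $q^* = 1$.
   Context: $e \in \mathbb{R}^r$ denotes the all-ones vector, $e_i$ the $i$-th standard unit vector of $\mathbb{R}^r$, $\|\cdot\|_2$ the Euclidean norm, and inequalities between vectors are entrywise. For $H \in \mathbb{R}^{r\times n}$, $\operatorname{cone}(H) = \{ Hy : y \in \mathbb{R}^n, y \ge 0\}$. The NC-SSC for $H$ means $\operatorname{cone}(ee^\top - I) \subseteq \operatorname{cone}(H)$, equivalently $e - e_i \in \operatorname{cone}(H)$ for all $i$. *)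

(* Defs.v *)
From mathcomp Require Import all_boot all_order all_algebra.
From mathcomp Require Import reals.
Set Implicit Arguments. Unset Strict Implicit. Unset Printing Implicit Defensive.
Import Order.TTheory GRing.Theory Num.Theory.
Local Open Scope ring_scope.

Section Defs.
Variable R : realType.

Definition ones (r : nat) : 'cV[R]_r := const_mx 1.
Definition unitv (r : nat) (i : 'I_r) : 'cV[R]_r := \col_k (if k == i then 1 else 0).

Definition nonneg_mx (m n : nat) (A : 'M[R]_(m, n)) : Prop := forall i j, 0 <= A i j.

Definition in_cone (r n : nat) (H : 'M[R]_(r, n)) (v : 'cV[R]_r) : Prop :=
  exists y : 'cV[R]_n, nonneg_mx y /\ H *m y = v.

Definition NC_SSC (r n : nat) (H : 'M[R]_(r, n)) : Prop :=
  forall i : 'I_r, in_cone H (ones r - unitv i).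

Definition enorm (r : nat) (x : 'cV[R]_r) : R := Num.sqrt (\sum_i x i 0 ^+ 2).

Definition feas_p (r n : nat) (H : 'M[R]_(r, n)) (x : 'cV[R]_r) : Prop :=
  (ones r)^T *m x = 1 /\ nonneg_mx (H^T *m x).

Definition feas_q (r n : nat) (H : 'M[R]_(r, n)) (x : 'cV[R]_r) : Prop :=
  feas_p H x /\ (forall i, -1 <= x i 0 <= 1).

(* "max_{x in S} ||x||_2 = v": the value v is attained on S and is an upper bound *)
Definition max_norm_is (r : nat) (S : 'cV[R]_r -> Prop) (v : R) : Prop :=
  (exists2 x, S x & enorm x = v) /\ (forall x, S x -> enorm x <= v).

End Defs.

(* Main.v *)
Require Import Defs.
From mathcomp Require Import all_boot all_order all_algebra.
From mathcomp Require Import reals ring lra.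
Import Order.TTheory GRing.Theory Num.Theory.
Local Open Scope ring_scope.

Section Aux.
Variable R : realType.
Variables r n : nat.
Variable H : 'M[R]_(r, n).

Lemma sum_feas {x : 'cV[R]_r} : feas_p H x -> \sum_i x i 0 = 1.
Proof.
case=> /(congr1 (fun M : 'M[R]_1 => M 0 0)); rewrite !mxE /= => h _; rewrite -[RHS]h.
by apply: eq_bigr => i _; rewrite !mxE mul1r.
Qed.

Lemma le1_feas {x : 'cV[R]_r} : NC_SSC H -> feas_p H x -> forall i, x i 0 <= 1.
Proof.
move=> NC hx i; have hs := sum_feas hx; case: hx => _ hn.
have [y [y0 hy]] := NC i.
have : 0 <= ((H *m y)^T *m x) 0 0.
  rewrite trmx_mul -mulmxA mxE; apply: sumr_ge0 => k _.
  by rewrite mxE; apply: mulr_ge0; [apply: y0 | apply: hn].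
rewrite hy mxE (bigD1 i) //= !mxE eqxx.
rewrite (bigD1 i) //= in hs.
have -> : \sum_(k | k != i) (ones R r - unitv R i)^T 0 k * x k 0 = \sum_(k | k != i) x k 0.
  by apply: eq_bigr => k /negbTE ki; rewrite !mxE ki subr0 mul1r.
lra.
Qed.

Lemma enorm_le1 (x : 'cV[R]_r) : (enorm x <= 1) = (\sum_i x i 0 ^+ 2 <= 1).
Proof. by rewrite /enorm -{1}sqrtr1 ler_sqrt. Qed.

Lemma sumsq_ge0 (x : 'cV[R]_r) : 0 <= \sum_i x i 0 ^+ 2.
Proof. by apply: sumr_ge0 => i _; apply: sqr_ge0. Qed.

Lemma enorm_eq1 {x : 'cV[R]_r} : enorm x = 1 -> \sum_i x i 0 ^+ 2 = 1.
Proof.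
move=> h; rewrite -[LHS]sqr_sqrtr ?sumsq_ge0 //.
by rewrite -/(enorm x) h expr1n.
Qed.

Lemma sq_le_sum (x : 'cV[R]_r) i : x i 0 ^+ 2 <= \sum_j x j 0 ^+ 2.
Proof.
rewrite (bigD1 i) //= lerDl; apply: sumr_ge0 => j _; apply: sqr_ge0.
Qed.

Lemma feas_conv {x y : 'cV[R]_r} {t} : 0 <= t <= 1 ->
  feas_p H x -> feas_p H y -> feas_p H ((1 - t) *: x + t *: y).
Proof.
move=> /andP[t0 t1] [hx nx] [hy ny]; split.
  by rewrite mulmxDr -!scalemxAr hx hy -scalerDl subrK scale1r.
move=> i j; rewrite mulmxDr -!scalemxAr; have a := nx i j; have b := ny i j.
rewrite !mxE in a b *; apply: addr_ge0; apply: mulr_ge0 => //; lra.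
Qed.

End Aux.
Arguments sum_feas {R r n H x}.
Arguments le1_feas {R r n H x}.
Arguments enorm_eq1 {R r x}.
Arguments feas_conv {R r n H x y t}.

Theorem lemma3 (R : realType) (r n : nat) (H : 'M[R]_(r, n)) :
  nonneg_mx H -> NC_SSC H ->
  (max_norm_is (feas_p H) 1 <-> max_norm_is (feas_q H) 1).
Proof.
move=> H0 NC; split.
  case=> [[x fx nx] ub]; split; last by move=> y [fy _]; apply: ub.
  exists x => //; split => // i.
  have := @sq_le_sum _ _ x i; rewrite (enorm_eq1 nx) => h.
  apply/andP; split; nra.
case=> [[x0 fx0 nx0] ub]; split; first by exists x0 => //; case: fx0.
move=> x fx; case: (lerP (enorm x) 1) => // hgt; exfalso.
have xle := le1_feas NC fx.
have [j0 hj0] : exists j, x j 0 < -1.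
  case: (boolP [exists j, x j 0 < -1]) => [/existsP // | /existsPn hn].
  have : enorm x <= 1.
    apply: ub; split => // i; rewrite xle andbT.
    by have := hn i; rewrite -leNgt.
  by rewrite leNgt hgt.
case: fx0 => fp0 bx0.
pose g j := if x j 0 < -1 then (x0 j 0 + 1) / (x0 j 0 - x j 0) else 2.
have gj0 : g j0 < 1.
  rewrite /g hj0 ltr_pdivrMr; last by have := bx0 j0; lra.
  by have := bx0 j0; lra.
case: (@arg_minP _ _ _ j0 xpredT g isT) => k _ kmin.
set t := g k.
have tj0 : t <= g j0 := kmin j0 isT.
have hk : x k 0 < -1.
  case: (boolP (x k 0 < -1)) => // hk.
  move: tj0 gj0; set G := g j0; rewrite /t /g (negbTE hk); lra.
have dk : 0 < x0 k 0 - x k 0 by have := bx0 k; lra.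
have t0 : 0 <= t.
  rewrite /t /g hk; apply: divr_ge0; last lra.
  by have := bx0 k; lra.
have t1 : t <= 1 by lra.
pose z := (1 - t) *: x0 + t *: x.
have zE j : z j 0 = (1 - t) * x0 j 0 + t * x j 0 by rewrite !mxE.
have fz : feas_p H z by apply: feas_conv => //; rewrite t0 t1.
have zk : z k 0 = -1.
  rewrite zE /t /g hk; field; lra.
have bz : forall i, -1 <= z i 0 <= 1.
  move=> i; rewrite (le1_feas NC fz) andbT zE.
  have := bx0 i; move=> /andP[a b].
  case: (boolP (x i 0 < -1)) => hi.
    have : t <= g i := kmin i isT.
    rewrite /g hi ler_pdivlMr; last lra.
    nra.
  move: hi; rewrite -leNgt => hi; nra.
have : enorm z <= 1 by apply: ub.
rewrite enorm_le1 (bigD1 k) //= zk => hs.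
have hrest : \sum_(i | i != k) z i 0 ^+ 2 = 0.
  apply/eqP; rewrite eq_le; apply/andP; split.
    by lra.
  by apply: sumr_ge0 => i _; apply: sqr_ge0.
have z0 i : i != k -> z i 0 = 0.
  move=> ik; apply/eqP; rewrite -sqrf_eq0; apply/eqP.
  by apply: (psumr_eq0P _ hrest) => // j _; apply: sqr_ge0.
have := sum_feas fz; rewrite (bigD1 k) //= zk big1; first lra.
by move=> i /z0.
Qed.
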